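(* Let $\mathfrak{A}_m(W)(s,E_m,Q_m,Q_n)$ be the annihilating operator of the colored Jones polynomial of the Whitehead link defined in the context, and let $\varepsilon_s$ denote evaluation at $s=1$ (after which $E_m,Q_m,Q_n$ commute). Then \[\varepsilon_s\mathfrak{A}_m(W)(s,E_m,Q_m,Q_n)=-\frac{1}{(1+Q_m^2)^2Q_m^2Q_n^2}(E_m+1)(E_m-Q_m^2)A^{\mathrm{Lk}}_m(W)(E_m,Q_m,Q_n),\] where $A^{\mathrm{Lk}}_m(W)(E_m,Q_m,Q_n)=Q_m^4Q_n^2E_m^3+(Q_m^4Q_n^4-Q_m^2Q_n^4+Q_m^4-2Q_m^2Q_n^2-Q_m^2+Q_n^2)E_m^2+(Q_m^4Q_n^2-Q_m^2Q_n^4-2Q_m^2Q_n^2+Q_n^4-Q_m^2+1)E_m+Q_n^2.$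
   Context: $s$ is an indeterminate. Work in the algebra of polynomials in $E_m$ with coefficients in $\mathbb{Q}(s,Q_m,Q_n)$ written on the left, with $E_m\,p(s,Q_m,Q_n)=p(s,sQ_m,Q_n)\,E_m$ (the composition rule for $(E_mf)(m,n)=f(m+1,n)$, $(Q_mf)(m,n)=s^mf(m,n)$, $(Q_nf)(m,n)=s^nf(m,n)$). Put $\Phi_k(Q_m)=1-s^kQ_m^4$ and $u_1=\frac{1}{\Phi_6(Q_m)}E_m-\frac{s^2Q_m^2}{\Phi_2(Q_m)}$, $v_1=\frac{s^2Q_m^2}{\Phi_6(Q_m)}E_m-\frac{1}{\Phi_2(Q_m)}$, $u_2=\frac{s^{12}Q_m^4}{\Phi_{10}(Q_m)\Phi_{12}(Q_m)}E_m^2-\frac{s^4(1+s^2)Q_m^2}{\Phi_6(Q_m)\Phi_{10}(Q_m)}E_m+\frac{1}{\Phi_4(Q_m)\Phi_6(Q_m)}$, $v_2=\frac{1}{\Phi_{10}(Q_m)\Phi_{12}(Q_m)}E_m^2-\frac{s^2(1+s^2)Q_m^2}{\Phi_6(Q_m)\Phi_{10}(Q_m)}E_m+\frac{s^4Q_m^4}{\Phi_4(Q_m)\Phi_6(Q_m)}$, $Y=u_2u_1(E_m-s^2Q_m^2)$, $P^0_W(s,E_m,Q_m,Q_n)=(s^2-s^4)u_2v_1(Q_m^2E_m-1)+s^2(Q_n^2+1+Q_n^{-2})u_2u_1(Q_m^2E_m-1)+s^2u_2u_1(s^2Q_m^2+s^{-2}Q_m^{-2})(Q_m^2E_m-1)+(s^2-s^4)u_2(Q_m^2E_m-1)-Y(Q_m^2Q_n^2+Q_m^2Q_n^{-2}+3+Q_m^{-2}Q_n^2+Q_m^{-2}Q_n^{-2})+s^{-2}(Q_n^2-s^2+Q_n^{-2})v_2v_1(E_m-s^2Q_m^2)+s^{-2}v_2v_1(s^2Q_m^2+s^{-2}Q_m^{-2})(E_m-s^2Q_m^2)+(s^{-4}-s^{-2})v_2Q_m^{-2}(E_m-s^2Q_m^2)-s^{-4}v_2u_1(E_m-s^2Q_m^2)$,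 $P^1_W(s,E_m,Q_m)=(E_m+1)\frac{(1-s^2Q_m^2)(1-s^6Q_m^2)}{1+s^4Q_m^2}$, and $\mathfrak{A}_m(W)=P^1_W(s,sE_m,Q_m)P^0_W(s,sE_m,Q_m,Q_n)$ (substitute $sE_m$ for $E_m$). Here $\varepsilon_s$ sends a left-normalized expression $\sum_k c_k(s,Q_m,Q_n)E_m^k$ to the commutative polynomial $\sum_k c_k(1,Q_m,Q_n)E_m^k$. *)

(* Defs.v *)
From HB Require Import structures.
From mathcomp Require Import all_boot all_order all_algebra.
From mathcomp Require Import generic_quotient fraction.
From mathcomp Require Import mpoly.
Set Implicit Arguments.
Unset Strict Implicit.
Unset Printing Implicit Defensive.
Import Order.TTheory GRing.Theory Num.Theory.
Local Open Scope ring_scope.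
Local Notation "x %:F" := (@tofrac _ x) .
Arguments tofrac {R}.

(* Polynomial ring Q[s, Q_m, Q_n]: variable 0 = s, 1 = Q_m, 2 = Q_n. *)
Definition Rp := {mpoly rat[3]}.
Definition K := {fraction Rp}.

Definition i0 : 'I_3 := @Ordinal 3 0 isT.
Definition i1 : 'I_3 := @Ordinal 3 1 isT.
Definition i2 : 'I_3 := @Ordinal 3 2 isT.

Definition sR : Rp := 'X_i0.
Definition QmR : Rp := 'X_i1.
Definition QnR : Rp := 'X_i2.

Definition sigmaR (p : Rp) : Rp := comp_mpoly [tuple sR; sR * QmR; QnR] p.
Definition eps1R (p : Rp) : Rp := comp_mpoly [tuple 1; QmR; QnR] p.

(* sigma extended to the fraction field (well defined since sigmaR is an
   injective ring endomorphism; here defined through a representative). *)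
Definition sigmaK (x : K) : K :=
  let r := repr x in (sigmaR (\n_r))%:F / (sigmaR (\d_r))%:F.

Definition s : K := sR%:F.
Definition Qm : K := QmR%:F.
Definition Qn : K := QnR%:F.

(* Ore algebra K[E_m; sigma]: an element sum_k c_k E_m^k (coefficients on
   the left) is stored as the polynomial sum_k c_k 'X^k in {poly K};
   multiplication is the skew product E_m c = sigma(c) E_m. *)
Definition skmul (p q : {poly K}) : {poly K} :=
  \sum_(i < size p) p`_i *: ('X^i * map_poly (iter i sigmaK) q).

Notation "p ** q" := (skmul p q) (at level 40, left associativity).

Definition Em : {poly K} := 'X.
Definition c (x : K) : {poly K} := x%:P.

(* substitution E_m |-> s E_m (s is central) *)
Definition subsE (p : {poly K}) : {poly K} := \poly_(i < size p) (p`_i * s ^+ i).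

Definition Phi (k : nat) (x : K) : K := 1 - s ^+ k * x ^+ 4.

Definition u1 : {poly K} :=
  c (Phi 6 Qm)^-1 ** Em - c (s ^+ 2 * Qm ^+ 2 / Phi 2 Qm).
Definition v1 : {poly K} :=
  c (s ^+ 2 * Qm ^+ 2 / Phi 6 Qm) ** Em - c (Phi 2 Qm)^-1.
Definition u2 : {poly K} :=
  c (s ^+ 12 * Qm ^+ 4 / (Phi 10 Qm * Phi 12 Qm)) ** Em ** Em
  - c (s ^+ 4 * (1 + s ^+ 2) * Qm ^+ 2 / (Phi 6 Qm * Phi 10 Qm)) ** Em
  + c (Phi 4 Qm * Phi 6 Qm)^-1.
Definition v2 : {poly K} :=
  c (Phi 10 Qm * Phi 12 Qm)^-1 ** Em ** Em
  - c (s ^+ 2 * (1 + s ^+ 2) * Qm ^+ 2 / (Phi 6 Qm * Phi 10 Qm)) ** Em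
  + c (s ^+ 4 * Qm ^+ 4 / (Phi 4 Qm * Phi 6 Qm)).

Definition Y : {poly K} := u2 ** u1 ** (Em - c (s ^+ 2 * Qm ^+ 2)).

Definition P0W : {poly K} :=
    c (s ^+ 2 - s ^+ 4) ** u2 ** v1 ** (c (Qm ^+ 2) ** Em - 1)
  + c (s ^+ 2 * (Qn ^+ 2 + 1 + Qn ^- 2)) ** u2 ** u1 ** (c (Qm ^+ 2) ** Em - 1)
  + c (s ^+ 2) ** u2 ** u1 ** c (s ^+ 2 * Qm ^+ 2 + s ^- 2 * Qm ^- 2)
      ** (c (Qm ^+ 2) ** Em - 1)
  + c (s ^+ 2 - s ^+ 4) ** u2 ** (c (Qm ^+ 2) ** Em - 1)
  - Y ** c (Qm ^+ 2 * Qn ^+ 2 + Qm ^+ 2 * Qn ^- 2 + 3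
            + Qm ^- 2 * Qn ^+ 2 + Qm ^- 2 * Qn ^- 2)
  + c (s ^- 2 * (Qn ^+ 2 - s ^+ 2 + Qn ^- 2)) ** v2 ** v1
      ** (Em - c (s ^+ 2 * Qm ^+ 2))
  + c (s ^- 2) ** v2 ** v1 ** c (s ^+ 2 * Qm ^+ 2 + s ^- 2 * Qm ^- 2)
      ** (Em - c (s ^+ 2 * Qm ^+ 2))
  + c (s ^- 4 - s ^- 2) ** v2 ** c (Qm ^- 2) ** (Em - c (s ^+ 2 * Qm ^+ 2))
  - c (s ^- 4) ** v2 ** u1 ** (Em - c (s ^+ 2 * Qm ^+ 2)).

Definition P1W : {poly K} :=
  (Em + 1) ** c ((1 - s ^+ 2 * Qm ^+ 2) * (1 - s ^+ 6 * Qm ^+ 2)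
                 / (1 + s ^+ 4 * Qm ^+ 2)).

Definition AmW : {poly K} := subsE P1W ** subsE P0W.

Definition eps_s_coef (x v : K) : Prop :=
  exists n d : Rp, eps1R d != 0 /\ x = n%:F / d%:F
                   /\ v = (eps1R n)%:F / (eps1R d)%:F.

(* epsilon_s on an operator sum_k c_k E_m^k, landing in the commutative
   polynomial ring K[E_m] (coefficients free of s). *)
Definition eps_s (P V : {poly K}) : Prop := forall k, eps_s_coef P`_k V`_k.

Definition ALkW : {poly K} :=
    (Qm ^+ 4 * Qn ^+ 2) *: 'X^3
  + (Qm ^+ 4 * Qn ^+ 4 - Qm ^+ 2 * Qn ^+ 4 + Qm ^+ 4 - 2 * Qm ^+ 2 * Qn ^+ 2
     - Qm ^+ 2 + Qn ^+ 2) *: 'X^2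
  + (Qm ^+ 4 * Qn ^+ 2 - Qm ^+ 2 * Qn ^+ 4 - 2 * Qm ^+ 2 * Qn ^+ 2 + Qn ^+ 4
     - Qm ^+ 2 + 1) *: 'X
  + (Qn ^+ 2)%:P.

(* Main.v *)
Require Import Defs.
From HB Require Import structures.
From mathcomp Require Import all_boot all_order all_algebra.
From mathcomp Require Import generic_quotient fraction.
From mathcomp Require Import mpoly.
From mathcomp Require Import ring zify.
Import GRing.Theory.
Local Open Scope ring_scope.
Local Notation "x %:F" := (@tofrac _ x) .
Arguments tofrac {R}.

Lemma frac_repr (x : K) : x = (\n_(repr x))%:F / (\d_(repr x))%:F.
Proof.
have hd := denom_ratioP (repr x).
apply: (@mulIf _ ((\d_(repr x))%:F)); first by rewrite tofrac_eq0.
rewrite mulfVK ?tofrac_eq0 //.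
rewrite -{1}[x]reprK.
unlock tofrac. rewrite !piE.
apply/eqmodP. rewrite /= FracField.equivfE /FracField.mulf !numden_Ratio ?mulf_neq0 ?oner_neq0 //.
by rewrite !mulr1 mulrC.
Qed.

Lemma sigmaRD : {morph sigmaR : x y / x + y}.
Proof. by move=> x y; rewrite /sigmaR rmorphD. Qed.
Lemma sigmaRM : {morph sigmaR : x y / x * y}.
Proof. by move=> x y; rewrite /sigmaR rmorphM. Qed.
Lemma sigmaR1 : sigmaR 1 = 1.
Proof. by rewrite /sigmaR rmorph1. Qed.
Lemma sigmaR0 : sigmaR 0 = 0.
Proof. by rewrite /sigmaR rmorph0. Qed.

Definition fmn (m : 'X_{1..3}) : 'X_{1..3} :=
  [multinom (if i == i0 then (m i0 + m i1)%N else m i) | i < 3].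

Lemma fmn_inj : injective fmn.
Proof.
move=> m1 m2 h; apply/mnmP => i.
have h1 := congr1 (fun m : 'X_{1..3} => m i1) h.
have h2 := congr1 (fun m : 'X_{1..3} => m i2) h.
have h0 := congr1 (fun m : 'X_{1..3} => m i0) h.
rewrite /fmn /= !mnmE /= in h0 h1 h2.
have [j ->] : exists j : 'I_3, i = j by exists i.
case: j => [[|[|[|j]]] hj] //.
- have -> : Ordinal hj = i0 by apply: val_inj.
  by rewrite h1 in h0; apply/eqP; rewrite -(eqn_add2r (m2 i1)) h0.
- by have -> : Ordinal hj = i1 by apply: val_inj.
- by have -> : Ordinal hj = i2 by apply: val_inj.
Qed.

Lemma sigmaRX m : sigmaR 'X_[m] = 'X_[fmn m].
Proof.
rewrite /sigmaR comp_mpolyX [RHS]mpolyXE_id !big_ord_recl big_ord0 /fmn !mnmE /=.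
rewrite /sR /QmR /QnR.
have -> : (lift ord0 ord0 : 'I_3) = i1 by apply: val_inj.
have -> : (lift ord0 (lift ord0 ord0) : 'I_3) = i2 by apply: val_inj.
have -> : (ord0 : 'I_3) = i0 by apply: val_inj.
rewrite !(tnth_nth 0) /= exprD exprMn.
by rewrite big_ord0 !mulr1 !mulrA.
Qed.

Lemma sigmaR_coef p m : (sigmaR p)@_(fmn m) = p@_m.
Proof.
elim/mpolyind: p => [|c m' p _ _ IH]; first by rewrite sigmaR0 !mcoeff0.
rewrite sigmaRD /sigmaR comp_mpolyZ -/(sigmaR _) sigmaRX !mcoeffD !mcoeffZ IH !mcoeffX.
by rewrite (inj_eq fmn_inj).
Qed.

Lemma sigmaR_eq0 p : (sigmaR p == 0) = (p == 0).
Proof.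
apply/eqP/eqP => [h|->]; last exact: sigmaR0.
by apply/mpolyP => m; rewrite -sigmaR_coef h !mcoeff0.
Qed.

Lemma sigmaK_frac n d : d != 0 -> sigmaK (n%:F / d%:F) = (sigmaR n)%:F / (sigmaR d)%:F.
Proof.
move=> hd.
rewrite /sigmaK.
set x := n%:F / d%:F.
have hd' := denom_ratioP (repr x).
have e := frac_repr x.
have hx : (\n_(repr x)) * d = n * (\d_(repr x)).
  apply/eqP; rewrite -tofrac_eq !tofracM; apply/eqP.
  rewrite {2}/x in e.
  have : (\n_(repr x))%:F / (\d_(repr x))%:F = n%:F / d%:F by rewrite -e.
  move/eqP; rewrite eqr_div ?tofrac_eq0 //; move/eqP ->; by rewrite mulrC.
apply/eqP; rewrite eqr_div ?tofrac_eq0 ?sigmaR_eq0 // -!tofracM tofrac_eq.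
by rewrite -!sigmaRM hx mulrC.
Qed.

Lemma eps1RD : {morph eps1R : x y / x + y}.
Proof. by move=> x y; rewrite /eps1R rmorphD. Qed.
Lemma eps1RM : {morph eps1R : x y / x * y}.
Proof. by move=> x y; rewrite /eps1R rmorphM. Qed.
Lemma eps1RN : {morph eps1R : x / - x}.
Proof. by move=> x; rewrite /eps1R rmorphN. Qed.
Lemma eps1R1 : eps1R 1 = 1.
Proof. by rewrite /eps1R rmorph1. Qed.
Lemma eps1R0 : eps1R 0 = 0.
Proof. by rewrite /eps1R rmorph0. Qed.

Lemma eps1R_sigma p : eps1R (sigmaR p) = eps1R p.
Proof.
elim/mpolyind: p => [|c m p _ _ IH]; first by rewrite sigmaR0.
rewrite sigmaRD eps1RD IH eps1RD; congr (_ + _).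
rewrite /sigmaR comp_mpolyZ -/(sigmaR _) sigmaRX /eps1R !comp_mpolyZ; congr (_ *: _).
rewrite !comp_mpolyX !big_ord_recl !big_ord0 /fmn !mnmE /=.
have -> : (lift ord0 ord0 : 'I_3) = i1 by apply: val_inj.
have -> : (lift ord0 (lift ord0 ord0) : 'I_3) = i2 by apply: val_inj.
have -> : (ord0 : 'I_3) = i0 by apply: val_inj.
by rewrite !(tnth_nth 0) /= !expr1n.
Qed.

Lemma E_frac n d : eps1R d != 0 -> eps_s_coef (n%:F / d%:F) ((eps1R n)%:F / (eps1R d)%:F).
Proof. by move=> h; exists n, d. Qed.

Lemma E_poly n : eps_s_coef n%:F (eps1R n)%:F.
Proof.
exists n, 1; rewrite eps1R1 oner_neq0 tofrac1 !divr1; split => //.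
Qed.

Lemma E_0 : eps_s_coef 0 0.
Proof. by have := E_poly 0; rewrite tofrac0 eps1R0 tofrac0. Qed.
Lemma E_1 : eps_s_coef 1 1.
Proof. by have := E_poly 1; rewrite tofrac1 eps1R1 tofrac1. Qed.

Lemma E_add {x y v w} : eps_s_coef x v -> eps_s_coef y w -> eps_s_coef (x + y) (v + w).
Proof.
move=> [n [d [hd [-> ->]]]] [n' [d' [hd' [-> ->]]]].
have hd0 : d != 0 by apply: contraNneq hd => ->; rewrite eps1R0.
have hd0' : d' != 0 by apply: contraNneq hd' => ->; rewrite eps1R0.
exists (n * d' + n' * d), (d * d'); split; first by rewrite eps1RM mulf_neq0.
rewrite eps1RM eps1RD !eps1RM !tofracM !tofracD !tofracM.
split => //; by rewrite addf_div ?tofrac_eq0.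
Qed.

Lemma nz_of_eps d : eps1R d != 0 -> d != 0.
Proof. by apply: contraNneq => ->; rewrite eps1R0. Qed.

Lemma E_mul {x y v w} : eps_s_coef x v -> eps_s_coef y w -> eps_s_coef (x * y) (v * w).
Proof.
move=> [n [d [hd [-> ->]]]] [n' [d' [hd' [-> ->]]]].
exists (n * n'), (d * d'); split; first by rewrite eps1RM mulf_neq0.
by rewrite !eps1RM !tofracM !mulf_div.
Qed.

Lemma E_opp {x v} : eps_s_coef x v -> eps_s_coef (- x) (- v).
Proof.
move=> [n [d [hd [-> ->]]]].
exists (- n), d; split => //.
by rewrite eps1RN !tofracN !mulNr.
Qed.

Lemma E_sub {x y v w} : eps_s_coef x v -> eps_s_coef y w -> eps_s_coef (x - y) (v - w).
Proof. by move=> h1 h2; apply: E_add => //; apply: E_opp. Qed.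

Lemma E_inv {x v} : eps_s_coef x v -> v != 0 -> eps_s_coef x^-1 v^-1.
Proof.
move=> [n [d [hd [-> ->]]]] hv.
have hn : eps1R n != 0.
  by apply: contraNneq hv => ->; rewrite tofrac0 mul0r.
exists d, n; split => //.
by rewrite !invf_div.
Qed.

Lemma E_exp {x v} k : eps_s_coef x v -> eps_s_coef (x ^+ k) (v ^+ k).
Proof.
move=> h; elim: k => [|k IH]; first by rewrite !expr0; exact: E_1.
by rewrite !exprS; apply: E_mul.
Qed.

Lemma E_nat k : eps_s_coef k%:R k%:R.
Proof.
elim: k => [|k IH]; first exact: E_0.
by have := E_add E_1 IH; rewrite -!mulrS.
Qed.

Lemma sigmaK_0 : sigmaK 0 = 0.
Proof.
have := @sigmaK_frac 0 1 (oner_neq0 _).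
by rewrite tofrac0 mul0r sigmaR0 tofrac0 mul0r.
Qed.

Lemma E_sigma {x v} : eps_s_coef x v -> eps_s_coef (sigmaK x) v.
Proof.
move=> [n [d [hd [-> ->]]]].
exists (sigmaR n), (sigmaR d); rewrite !eps1R_sigma; split => //; split => //.
by rewrite sigmaK_frac // nz_of_eps.
Qed.

Lemma E_iter_sigma i {x v} : eps_s_coef x v -> eps_s_coef (iter i sigmaK x) v.
Proof. by move=> h; elim: i => [|i IH] //=; apply: E_sigma. Qed.

Lemma iter_sigmaK0 i : iter i sigmaK 0 = 0.
Proof. by elim: i => [|i IH] //=; rewrite IH sigmaK_0. Qed.

Lemma E_s : eps_s_coef s 1.
Proof.
have := E_poly sR; rewrite /s; congr eps_s_coef.
by rewrite /eps1R /sR comp_mpolyXU /= tofrac1.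
Qed.
Lemma E_Qm : eps_s_coef Qm Qm.
Proof.
have := E_poly QmR; rewrite /Qm; congr eps_s_coef.
by rewrite /eps1R /QmR comp_mpolyXU.
Qed.
Lemma E_Qn : eps_s_coef Qn Qn.
Proof.
have := E_poly QnR; rewrite /Qn; congr eps_s_coef.
by rewrite /eps1R /QnR comp_mpolyXU.
Qed.

Lemma coef_skmul P Q k : (P ** Q)`_k =
  \sum_(i < size P) P`_i * (if (k < i)%N then 0 else iter i sigmaK Q`_(k - i)).
Proof.
rewrite /skmul coef_sum; apply: eq_bigr => i _.
by rewrite coefZ coefXnM coef_map_id0 // iter_sigmaK0.
Qed.

Lemma sum_widen (F : nat -> K) n N : (n <= N)%N -> (forall i, (n <= i)%N -> F i = 0) ->
  \sum_(i < n) F i = \sum_(i < N) F i.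
Proof.
move=> hnN F0.
rewrite -!(big_mkord xpredT) (@big_cat_nat _ _ _ n 0 N) //=.
rewrite [X in _ + X]big1_seq ?addr0 // => i /andP[_]; rewrite mem_index_iota => /andP[h _].
exact: F0.
Qed.

Lemma E_sum N (F G : nat -> K) : (forall i, eps_s_coef (F i) (G i)) ->
  eps_s_coef (\sum_(i < N) F i) (\sum_(i < N) G i).
Proof.
move=> h; elim: N => [|N IH]; first by rewrite !big_ord0; exact: E_0.
by rewrite !big_ord_recr /=; apply: E_add.
Qed.

Lemma EP_mul P Q V W : eps_s P V -> eps_s Q W -> eps_s (P ** Q) (V * W).
Proof.
move=> hP hQ k; rewrite coef_skmul coefM.
set N := (size P + k.+1)%N.
rewrite (@sum_widen (fun i => P`_i * (if (k < i)%N then 0 else iter i sigmaK Q`_(k - i))) (size P) N);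
  last 2 first.
- by rewrite leq_addr.
- by move=> i hi /=; rewrite nth_default // mul0r.
rewrite (eq_bigr (fun i : 'I_k.+1 => V`_i * (if (k < i)%N then 0 else W`_(k - i))));
  last by move=> i _; rewrite ltnNge -ltnS ltn_ord.
rewrite (@sum_widen (fun i => V`_i * (if (k < i)%N then 0 else W`_(k - i))) k.+1 N);
  last 2 first.
- by rewrite leq_addl.
- by move=> i hi /=; rewrite hi mulr0.
apply: (@E_sum N (fun i => P`_i * (if (k < i)%N then 0 else iter i sigmaK Q`_(k - i)))
   (fun i => V`_i * (if (k < i)%N then 0 else W`_(k - i)))) => i.
apply: E_mul => //.
case: ifP => _; first exact: E_0.
exact: E_iter_sigma.
Qed.

Lemma EP_subsE P V : eps_s P V -> eps_s (subsE P) V.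
Proof.
move=> hP k; rewrite /subsE coef_poly.
case: ifP => hk.
- by have := E_mul (hP k) (E_exp k E_s); rewrite expr1n mulr1.
- by have := hP k; rewrite nth_default // leqNgt hk.
Qed.

Lemma E_congr x v x' v' : eps_s_coef x v -> x = x' -> v = v' -> eps_s_coef x' v'.
Proof. by move=> h <- <-. Qed.

Lemma EP_c x v : eps_s_coef x v -> eps_s (c x) v%:P.
Proof. move=> h k. case: (k =P 0%N) => [->|hk].
- eapply E_congr; [exact h| |]; by rewrite /c coefC.
- eapply E_congr; [exact E_0| |]; rewrite /c coefC; by move/eqP: hk => /negbTE ->.
Qed.

Lemma EP_X : eps_s Em 'X.
Proof. move=> k; eapply E_congr; [exact: (E_nat (k == 1)%N)| |]; by rewrite /Em coefX. Qed.

Lemma EP_1 : eps_s 1 1.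
Proof. move=> k; eapply E_congr; [exact: (E_nat (k == 0)%N)| |]; by rewrite coef1. Qed.

Lemma EP_add P Q V W : eps_s P V -> eps_s Q W -> eps_s (P + Q) (V + W).
Proof. move=> h1 h2 k; eapply E_congr; [exact: (E_add (h1 k) (h2 k))| |]; by rewrite coefD. Qed.

Lemma EP_opp P V : eps_s P V -> eps_s (- P) (- V).
Proof. move=> h1 k; eapply E_congr; [exact: (E_opp (h1 k))| |]; by rewrite coefN. Qed.

Lemma EP_sub P Q V W : eps_s P V -> eps_s Q W -> eps_s (P - Q) (V - W).
Proof. move=> h1 h2 k; eapply E_congr; [exact: (E_sub (h1 k) (h2 k))| |]; by rewrite coefB. Qed.

Lemma natr_inj_F (F : fieldType) : (forall n, (n.+1)%:R != 0 :> F) ->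
  forall i j : nat, (i%:R : F) = j%:R -> i = j.
Proof.
move=> hc.
suff H : forall i j : nat, (i < j)%N -> (i%:R : F) <> j%:R.
  move=> i j e; case: (ltngtP i j) => // h; [case: (H _ _ h e)| case: (H _ _ h (esym e))].
move=> i j hij e.
have ej : j = (i + (j - i - 1).+1)%N by lia.
move: e; rewrite ej natrD => /eqP; rewrite eq_sym -subr_eq0 addrAC subrr add0r.
by rewrite (negbTE (hc _)).
Qed.

Lemma poly_eq6 (F : fieldType) (p q : {poly F}) :
  (forall n, (n.+1)%:R != 0 :> F) -> (size p <= 6)%N -> (size q <= 6)%N ->
  (forall x, p.[x] = q.[x]) -> p = q.
Proof.
move=> hc hp hq he; apply/eqP; rewrite -subr_eq0; apply/eqP.
apply: (@roots_geq_poly_eq0 _ _ [seq i%:R | i <- iota 0 6]).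
- by apply/allP => x _; rewrite /root hornerD hornerN he subrr.
- rewrite map_inj_uniq ?iota_uniq // => i j; exact: natr_inj_F.
- rewrite size_map size_iota; apply: leq_trans (size_polyD _ _) _.
  by rewrite size_polyN geq_max hp hq.
Qed.

Lemma szM (F : fieldType) (p q : {poly F}) m n : (size p <= m)%N -> (size q <= n)%N -> (size (p * q)%R <= (m + n).-1)%N.
Proof.
move=> h1 h2; apply: leq_trans (size_polyMleq _ _) _.
by rewrite -!subn1 leq_sub2r // leq_add.
Qed.
Lemma szD (F : fieldType) (p q : {poly F}) m n : (size p <= m)%N -> (size q <= n)%N -> (size (p + q)%R <= maxn m n)%N.
Proof.
move=> h1 h2; apply: leq_trans (size_polyD _ _) _.
by rewrite geq_max !leq_max h1 h2 orbT.
Qed.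
Lemma szN (F : fieldType) (p : {poly F}) m : (size p <= m)%N -> (size (- p)%R <= m)%N.
Proof. by rewrite size_polyN. Qed.
Lemma szZ (F : fieldType) (a : F) (p : {poly F}) m : (size p <= m)%N -> (size (a *: p) <= m)%N.
Proof. by move=> h; apply: leq_trans (size_scale_leq _ _) h. Qed.
Lemma szC (F : fieldType) (a : F) : (size a%:P <= 1)%N.
Proof. exact: size_polyC_leq1. Qed.
Lemma szX (F : fieldType) : (size ('X : {poly F}) <= 2)%N.
Proof. by rewrite size_polyX. Qed.
Lemma szXn (F : fieldType) k : (size ('X^k : {poly F}) <= k.+1)%N.
Proof. by rewrite size_polyXn. Qed.
Lemma sz1 (F : fieldType) : (size (1 : {poly F})%R <= 1)%N.
Proof. by rewrite size_poly1. Qed.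

Ltac sz := match goal with |- is_true (leq (size (polyseq ?p)) _) => szT p end
with szT p := lazymatch p with
  | (_ * _)%R => eapply szM; [sz | sz]
  | (_ + _)%R => eapply szD; [sz | sz]
  | (- _)%R => eapply szN; sz
  | (_ *: _)%R => eapply szZ; sz
  | (_ %:P) => exact: szC
  | 'X => exact: szX
  | ('X^_) => exact: szXn
  | 1%R => exact: sz1
  end.

Lemma key (F : fieldType) (a b : F) :
  (forall n, (n.+1)%:R != 0 :> F) ->
  1 - a ^+ 4 != 0 -> 1 + a ^+ 2 != 0 -> a != 0 -> b != 0 ->
  ('X + 1) * ((1 - a ^+ 2) * (1 - a ^+ 2) / (1 + a ^+ 2))%:P *
  ((1 - 1)%:P *
   ((a ^+ 4 / ((1 - a ^+ 4) * (1 - a ^+ 4)))%:P * 'X * 'X -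
    ((1 + 1) * a ^+ 2 / ((1 - a ^+ 4) * (1 - a ^+ 4)))%:P * 'X +
    (((1 - a ^+ 4) * (1 - a ^+ 4))^-1)%:P) *
   ((a ^+ 2 / (1 - a ^+ 4))%:P * 'X - ((1 - a ^+ 4)^-1)%:P) *
   ((a ^+ 2)%:P * 'X - 1) +
   (b ^+ 2 + 1 + b ^- 2)%:P *
   ((a ^+ 4 / ((1 - a ^+ 4) * (1 - a ^+ 4)))%:P * 'X * 'X -
    ((1 + 1) * a ^+ 2 / ((1 - a ^+ 4) * (1 - a ^+ 4)))%:P * 'X +
    (((1 - a ^+ 4) * (1 - a ^+ 4))^-1)%:P) *
   (((1 - a ^+ 4)^-1)%:P * 'X - (a ^+ 2 / (1 - a ^+ 4))%:P) *
   ((a ^+ 2)%:P * 'X - 1) +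
   1%:P *
   ((a ^+ 4 / ((1 - a ^+ 4) * (1 - a ^+ 4)))%:P * 'X * 'X -
    ((1 + 1) * a ^+ 2 / ((1 - a ^+ 4) * (1 - a ^+ 4)))%:P * 'X +
    (((1 - a ^+ 4) * (1 - a ^+ 4))^-1)%:P) *
   (((1 - a ^+ 4)^-1)%:P * 'X - (a ^+ 2 / (1 - a ^+ 4))%:P) *
   (a ^+ 2 + a ^- 2)%:P * ((a ^+ 2)%:P * 'X - 1) +
   (1 - 1)%:P *
   ((a ^+ 4 / ((1 - a ^+ 4) * (1 - a ^+ 4)))%:P * 'X * 'X -
    ((1 + 1) * a ^+ 2 / ((1 - a ^+ 4) * (1 - a ^+ 4)))%:P * 'X +
    (((1 - a ^+ 4) * (1 - a ^+ 4))^-1)%:P) *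
   ((a ^+ 2)%:P * 'X - 1) -
   ((a ^+ 4 / ((1 - a ^+ 4) * (1 - a ^+ 4)))%:P * 'X * 'X -
    ((1 + 1) * a ^+ 2 / ((1 - a ^+ 4) * (1 - a ^+ 4)))%:P * 'X +
    (((1 - a ^+ 4) * (1 - a ^+ 4))^-1)%:P) *
   (((1 - a ^+ 4)^-1)%:P * 'X - (a ^+ 2 / (1 - a ^+ 4))%:P) *
   ('X - (a ^+ 2)%:P) *
   (a ^+ 2 * b ^+ 2 + a ^+ 2 / b ^+ 2 + 3 + a ^- 2 * b ^+ 2 +
    a ^- 2 / b ^+ 2)%:P +
   (b ^+ 2 - 1 + b ^- 2)%:P *
   ((((1 - a ^+ 4) * (1 - a ^+ 4))^-1)%:P * 'X * 'X -
    ((1 + 1) * a ^+ 2 / ((1 - a ^+ 4) * (1 - a ^+ 4)))%:P * 'X +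
    (a ^+ 4 / ((1 - a ^+ 4) * (1 - a ^+ 4)))%:P) *
   ((a ^+ 2 / (1 - a ^+ 4))%:P * 'X - ((1 - a ^+ 4)^-1)%:P) *
   ('X - (a ^+ 2)%:P) +
   1%:P *
   ((((1 - a ^+ 4) * (1 - a ^+ 4))^-1)%:P * 'X * 'X -
    ((1 + 1) * a ^+ 2 / ((1 - a ^+ 4) * (1 - a ^+ 4)))%:P * 'X +
    (a ^+ 4 / ((1 - a ^+ 4) * (1 - a ^+ 4)))%:P) *
   ((a ^+ 2 / (1 - a ^+ 4))%:P * 'X - ((1 - a ^+ 4)^-1)%:P) *
   (a ^+ 2 + a ^- 2)%:P * ('X - (a ^+ 2)%:P) +
   (1 - 1)%:P *
   ((((1 - a ^+ 4) * (1 - a ^+ 4))^-1)%:P * 'X * 'X -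
    ((1 + 1) * a ^+ 2 / ((1 - a ^+ 4) * (1 - a ^+ 4)))%:P * 'X +
    (a ^+ 4 / ((1 - a ^+ 4) * (1 - a ^+ 4)))%:P) *
   (a ^- 2)%:P * ('X - (a ^+ 2)%:P) -
   1%:P *
   ((((1 - a ^+ 4) * (1 - a ^+ 4))^-1)%:P * 'X * 'X -
    ((1 + 1) * a ^+ 2 / ((1 - a ^+ 4) * (1 - a ^+ 4)))%:P * 'X +
    (a ^+ 4 / ((1 - a ^+ 4) * (1 - a ^+ 4)))%:P) *
   (((1 - a ^+ 4)^-1)%:P * 'X - (a ^+ 2 / (1 - a ^+ 4))%:P) *
   ('X - (a ^+ 2)%:P))
 =
  - ((1 + a ^+ 2) ^+ 2 * a ^+ 2 * b ^+ 2)^-1 *: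
  (('X + 1) * ('X - (a ^+ 2)%:P) * ((a ^+ 4 * b ^+ 2) *: 'X^3
  + (a ^+ 4 * b ^+ 4 - a ^+ 2 * b ^+ 4 + a ^+ 4 - 2 * a ^+ 2 * b ^+ 2
     - a ^+ 2 + b ^+ 2) *: 'X^2
  + (a ^+ 4 * b ^+ 2 - a ^+ 2 * b ^+ 4 - 2 * a ^+ 2 * b ^+ 2 + b ^+ 4
     - a ^+ 2 + 1) *: 'X
  + (b ^+ 2)%:P))
.
Proof.
move=> hc h1 h2 h3 h4.
apply: poly_eq6 => //.
- eapply leq_trans; [sz | done].
- eapply leq_trans; [sz | done].
- move=> x; rewrite -(@polyC1 F) !(hornerD, hornerN, hornerM, hornerC, hornerX, hornerXn, hornerZ).
  field.
by rewrite h1 h2 h3 h4.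
Qed.

Lemma R1 : (1 - QmR ^+ 4 : Rp) != 0.
Proof.
apply/negP => /eqP h.
have := congr1 (meval (fun _ => 2%:R : rat)) h.
rewrite mevalB meval1 rmorphXn /= /QmR mevalXU meval0.
by move/eqP.
Qed.

Lemma EP_eq P V T : eps_s P V -> V = T -> eps_s P T.
Proof. by move=> h <-. Qed.

Lemma R2 : (1 + QmR ^+ 2 : Rp) != 0.
Proof.
apply/negP => /eqP h.
have := congr1 (meval (fun _ => 2%:R : rat)) h.
rewrite mevalD meval1 rmorphXn /= /QmR mevalXU meval0.
by move/eqP.
Qed.

Lemma R3 : (QmR : Rp) != 0.
Proof.
apply/negP => /eqP h.
have := congr1 (meval (fun _ => 2%:R : rat)) h.
rewrite /QmR mevalXU meval0.
by move/eqP.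
Qed.

Lemma R4 : (QnR : Rp) != 0.
Proof.
apply/negP => /eqP h.
have := congr1 (meval (fun _ => 2%:R : rat)) h.
rewrite /QnR mevalXU meval0.
by move/eqP.
Qed.

Lemma nzQm4 : 1 - Qm ^+ 4 != 0.
Proof. by rewrite /Qm -tofracXn -tofrac1 -tofracB tofrac_eq0 R1. Qed.
Lemma nzQm2 : 1 + Qm ^+ 2 != 0.
Proof. by rewrite /Qm -tofracXn -tofrac1 -tofracD tofrac_eq0 R2. Qed.
Lemma nzQm : Qm != 0.
Proof. by rewrite /Qm tofrac_eq0 R3. Qed.
Lemma nzQn : Qn != 0.
Proof. by rewrite /Qn tofrac_eq0 R4. Qed.


Lemma E_sexp k : eps_s_coef (s ^+ k) 1.
Proof. by have := E_exp k E_s; rewrite expr1n. Qed.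
Lemma E_sinv k : eps_s_coef (s ^+ k)^-1 1.
Proof. by have := E_inv (E_sexp k) (oner_neq0 _); rewrite invr1. Qed.
Lemma E_smul k y w : eps_s_coef y w -> eps_s_coef (s ^+ k * y) w.
Proof. by move=> h; have := E_mul (E_sexp k) h; rewrite mul1r. Qed.
Lemma E_sinvmul k y w : eps_s_coef y w -> eps_s_coef ((s ^+ k)^-1 * y) w.
Proof. by move=> h; have := E_mul (E_sinv k) h; rewrite mul1r. Qed.

Ltac nzK := match goal with |- is_true (~~ (?a == _)) => nzT a end
with nzT a := lazymatch a with
 | _ * _ => apply: mulf_neq0; [nzK|nzK]
 | _ ^+ _ => apply: expf_neq0; nzK
 | 1 - _ => exact nzQm4
 | 1 + _ => exact nzQm2
 | Qm => exact nzQm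
 | Qn => exact nzQn
 | 1 => exact (oner_neq0 _)
end.

Ltac solveE :=
  lazymatch goal with
  | |- eps_s_coef (s ^+ _ * _) _ => eapply E_smul; solveE
  | |- eps_s_coef ((s ^+ _)^-1 * _) _ => eapply E_sinvmul; solveE
  | |- eps_s_coef (s ^+ _) _ => exact (E_sexp _)
  | |- eps_s_coef ((s ^+ _)^-1) _ => exact (E_sinv _)
  | |- eps_s_coef (_ + _) _ => eapply E_add; [solveE | solveE]
  | |- eps_s_coef (- _) _ => eapply E_opp; solveE
  | |- eps_s_coef (_ * _) _ => eapply E_mul; [solveE | solveE]
  | |- eps_s_coef (_ ^+ _) _ => eapply E_exp; solveE
  | |- eps_s_coef (_ ^-1) _ => eapply E_inv; [solveE | nzK]
  | |- eps_s_coef s _ => exact E_s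
  | |- eps_s_coef Qm _ => exact E_Qm
  | |- eps_s_coef Qn _ => exact E_Qn
  | |- eps_s_coef 1 _ => exact E_1
  | |- eps_s_coef 0 _ => exact E_0
  | |- eps_s_coef (_ %:R) _ => exact (E_nat _)
  | |- eps_s_coef (Phi _ _) _ => unfold Phi; solveE
  | _ => idtac
  end.

Ltac solveEP :=
  lazymatch goal with
  | |- eps_s (subsE _) _ => eapply EP_subsE; solveEP
  | |- eps_s (_ ** _) _ => eapply EP_mul; [solveEP | solveEP]
  | |- eps_s (_ + _) _ => eapply EP_add; [solveEP | solveEP]
  | |- eps_s (- _) _ => eapply EP_opp; solveEP
  | |- eps_s (c _) _ => eapply EP_c; solveE
  | |- eps_s Em _ => exact EP_X
  | |- eps_s 1 _ => exact EP_1
  | |- eps_s u1 _ => unfold u1; solveEP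
  | |- eps_s u2 _ => unfold u2; solveEP
  | |- eps_s v1 _ => unfold v1; solveEP
  | |- eps_s v2 _ => unfold v2; solveEP
  | |- eps_s Y _ => unfold Y; solveEP
  | |- eps_s P0W _ => unfold P0W; solveEP
  | |- eps_s P1W _ => unfold P1W; solveEP
  | _ => idtac
  end.




Lemma hcK : forall n, (n.+1)%:R != 0 :> K.
Proof.
move=> n.
rewrite -(rmorph_nat (@tofrac Rp)) tofrac_eq0 -(rmorph_nat (@mpolyC 3 rat)) mpolyC_eq0.
by rewrite Num.Theory.pnatr_eq0.
Qed.

Theorem mainTheorem3 :
  eps_s AmW
    ((- ((1 + Qm ^+ 2) ^+ 2 * Qm ^+ 2 * Qn ^+ 2)^-1) *:
       (('X + 1) * ('X - (Qm ^+ 2)%:P) * ALkW)).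
Proof.
eapply EP_eq.
  unfold AmW. solveEP.
unfold ALkW.
have kk := (@key _ Qm Qn hcK nzQm4 nzQm2 nzQm nzQn). exact kk.
Qed.
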